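(* Let $G$ be a finite soluble group whose order is divisible by at least four distinct primes. Then the diameter of $\Gamma(G)$ is at most $3$.
   Context: For a finite group $G$, let $\widetilde{\Gamma}(G)$ be the graph with vertex set $G$ in which two distinct elements $x,y$ are adjacent if and only if $|\langle x,y\rangle|$ is divisible by at least three distinct primes. $\Gamma(G)$ is the subgraph of $\widetilde{\Gamma}(G)$ obtained by deleting its isolated vertices. *)

(* Defs.v *)
From mathcomp Require Import all_boot all_fingroup all_solvable.
Set Implicit Arguments. Unset Strict Implicit. Unset Printing Implicit Defensive.
Local Open Scope group_scope.

Definition prime_graph_adj (gT : finGroupType) (x y : gT) : bool :=
  (x != y) && (3 <= size (primes #|<<[set x; y]>>|))%N.

Definition Gamma_vertex (gT : finGroupType) (G : {set gT}) (x : gT) : bool :=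
  (x \in G) && [exists z in G, prime_graph_adj x z].

(* Distance between x and y in \widetilde{\Gamma}(G) (equivalently in Gamma(G),
   since intermediate vertices of a path are non-isolated) is at most n. *)
Definition Gamma_dist_le (gT : finGroupType) (G : {set gT}) (n : nat) (x y : gT) : Prop :=
  exists p : seq gT, [/\ all (mem G) p, path (@prime_graph_adj gT) x p,
                          last x p = y & (size p <= n)%N].

Definition Gamma_diam_le (gT : finGroupType) (G : {set gT}) (n : nat) : Prop :=
  forall x y, Gamma_vertex G x -> Gamma_vertex G y -> Gamma_dist_le G n x y.

(* Main.v *)
Require Import Defs.
From mathcomp Require Import all_boot all_fingroup all_solvable ssralg finalg.
From Stdlib Require Import Classical.
Set Implicit Arguments. Unset Strict Implicit. Unset Printing Implicit Defensive.
Import GRing.Theory FiniteModule.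
Local Open Scope group_scope.

Section Key.
Variables (gT : finGroupType) (N : {group gT}) (abN : abelian N).

Lemma sum_fix0 (X : {group gT}) (u : fmod_of abN) :
  X \subset 'N(N) -> 'C_N(X) = 1 -> (\sum_(x in X) u ^@ x = 0)%R.
Proof.
move=> nNX cNX; set S := (\sum_(x in X) u ^@ x)%R.
have fixS z : z \in X -> (S ^@ z = S)%R.
  move=> Xz; rewrite /S actr_sum.
  rewrite [RHS](reindex_inj (mulIg z)) /=; apply: eq_big => [x|x Xx].
    by rewrite groupMr.
  by rewrite actrM ?(subsetP nNX) // groupM.
have: val S \in 'C_N(X).
  rewrite inE fmodP /=; apply/centP => z Xz.
  rewrite /commute conjgC -fmvalJ ?(subsetP nNX) // fixS //.
rewrite cNX inE => /eqP S1; apply: val_inj; rewrite S1 /=.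
by [].
Qed.
End Key.

Lemma key_fpf (gT : finGroupType) (N M : {group gT}) (y : gT) :
  abelian N -> M \subset 'N(N) -> y \in 'N(N) -> y \in 'N(M) -> prime #[y] ->
  M :!=: 1 -> 'C_N(M) = 1 -> 'C_N[y] = 1 -> 'C_M[y] = 1 ->
  coprime #|M| #|N| -> N :=: 1.
Proof.
move=> abN nNM nNy nMy pry ntM cNM cNy cMy coMN.
have nNY : <[y]> \subset 'N(N) by rewrite cycle_subG.
have nMY : <[y]> \subset 'N(M) by rewrite cycle_subG.
have cNY : 'C_N(<[y]>) = 1 by rewrite cent_cycle.
have key (u : fmod_of abN) : (u *+ #|M| = 0)%R.
  have T0 : (\sum_(m in M) (\sum_(d in <[y]>) (u ^@ m^-1) ^@ d) ^@ m = 0)%R.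
    by apply: big1 => m Mm; rewrite sum_fix0 // act0r.
  have T1 : (\sum_(m in M) (\sum_(d in <[y]>) (u ^@ m^-1) ^@ d) ^@ m
           = \sum_(d in <[y]>) \sum_(m in M) u ^@ (d ^ m))%R.
    rewrite exchange_big /=; apply: eq_bigr => m Mm; rewrite actr_sum.
    apply: eq_bigr => d Yd.
    have Nm : m \in 'N(N) by apply: (subsetP nNM).
    have Nd : d \in 'N(N) by apply: (subsetP nNY).
    by rewrite -!actrM ?groupM ?groupV // conjgE.
  rewrite T1 (bigD1 1) //= in T0.
  rewrite [X in (_ + X)%R]big1 ?addr0 in T0; last first.
    move=> d /andP[Yd ntd].
    have eqY : <[d]> = <[y]>.
      apply/eqP; rewrite eqEcard cycle_subG Yd /=.
      have : #[d] %| #[y] by rewrite order_dvdG.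
      have ntd' : #[d] != 1%N by rewrite order_eq1.
      by move/(prime_nt_dvdP pry ntd') => e; rewrite -[#|<[d]>|]/#[d] e.
    have cMd : 'C_M[d] = 1 by rewrite -cent_cycle eqY cent_cycle.
    have injc : {in M &, injective (fun m => d ^ m)}.
      move=> m1 m2 M1 M2 /= e.
      have e' : d ^ (m1 * m2^-1) = d by rewrite conjgM e conjgK.
      have : m1 * m2^-1 \in 'C_M[d].
        rewrite inE groupM ?groupV //=; apply/cent1P; apply: commute_sym.
        by rewrite /commute conjgC e'.
      by rewrite cMd inE -eq_mulgV1 => /eqP.
    have Nd : d \in 'N(M) by apply: (subsetP nMY).
    have eqS : [set d ^ m | m in M] = [set m * d | m in M].
      apply/eqP; rewrite eqEcard !card_in_imset //; last first.
        by move=> m1 m2 _ _; apply: mulIg.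
      rewrite leqnn andbT; apply/subsetP => _ /imsetP[m Mm ->].
      apply/imsetP; exists (m^-1 * m ^ d^-1).
        by rewrite groupM ?groupV // memJ_norm // groupV.
      by rewrite !conjgE invgK !mulgA mulgKV.
    rewrite -(big_imset (fun j => u ^@ j)%R injc) /= eqS big_imset /=; last first.
      by move=> m1 m2 _ _; apply: mulIg.
    have Ndn : d \in 'N(N) by apply: (subsetP nNY).
    rewrite (eq_bigr (fun m => (u ^@ m) ^@ d)%R); last first.
      by move=> m Mm; rewrite actrM // (subsetP nNM).
    by rewrite -actr_sum sum_fix0 // act0r.
  rewrite -T0; symmetry; rewrite (eq_bigr (fun _ => u)) ?sumr_const //.
  by move=> m _; rewrite conj1g actr1.
apply/trivgP; apply/subsetP => x Nx; rewrite inE.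
have := key (fmod abN x); move/(congr1 val); rewrite fmvalZ fmodK // fmval0.
move=> xM; have : #[x] %| gcdn #|M| #|N|.
  by rewrite dvdn_gcd order_dvdn xM eqxx order_dvdG.
by rewrite (eqP coMN) dvdn1 order_eq1.
Qed.

Lemma pnat_cop (l1 l2 m n : nat) : l1 != l2 -> l1.-nat m -> l2.-nat n -> coprime m n.
Proof.
move=> ne pm pn; apply: (pnat_coprime pm); apply: (pi_pnat pn).
by rewrite !inE eq_sym.
Qed.

Lemma elt_dvd (gT : finGroupType) (a : gT) (l : nat) : l.-elt a -> a != 1 -> l %| #[a].
Proof.
move=> pa nta; have ntA : <[a]> != 1 by rewrite cycle_eq1.
by have [_ -> _] := pgroup_pdiv pa ntA.
Qed.

Lemma two_div (gT : finGroupType) (a b : gT) (l1 l2 : nat) :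
  l1 != l2 -> l1.-elt a -> l2.-elt b -> a != 1 -> b != 1 -> commute a b ->
  l1 %| #[a * b] /\ l2 %| #[a * b].
Proof.
move=> ne pa pb nta ntb cab.
rewrite orderM //; last exact: pnat_cop pa pb.
by split; [apply: dvdn_mulr; apply: elt_dvd | apply: dvdn_mull; apply: elt_dvd].
Qed.

Lemma dvd_part_pi (pi : nat_pred) (n p : nat) : p \in pi -> prime p -> p %| n -> 0 < n -> p %| (n`_pi)%N.
Proof.
move=> pip pp pn n0.
have : p \in \pi((n`_pi)%N) by rewrite pi_of_part // inE /= pip andbT mem_primes pp n0 pn.
by rewrite mem_primes => /and3P[].
Qed.

Lemma core (gT : finGroupType) (H N : {group gT}) (s t u : nat) (L : seq nat) :
  prime s -> prime t -> prime u -> s != t -> s != u -> t != u ->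
  s \in L -> t \in L -> u \in L ->
  solvable H -> N \subset H -> H \subset 'N(N) -> abelian N -> s.-group N -> N :!=: 1 ->
  t %| #|H| -> u %| #|H| ->
  (forall g l1 l2, g \in H -> l1 \in L -> l2 \in L -> l1 != l2 ->
      l1 %| #[g] -> l2 %| #[g] -> False) -> False.
Proof.
move=> ps pt pu st su tu sL tL uL solH sNH nNH abN pN ntN tH uH hno.
have [K hallK _] := Hall_exists_subJ (pred2 t u) solH.
have sKH := pHall_sub hallK; have piK := pHall_pgroup hallK.
have H0 : 0 < #|H| by apply: cardG_gt0.
have tK : t %| #|K| by rewrite (card_Hall hallK) dvd_part_pi // !inE eqxx.
have uK : u %| #|K| by rewrite (card_Hall hallK) dvd_part_pi // !inE eqxx orbT.
have ntK : K :!=: 1.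
  apply/eqP => K1; move: tK; rewrite K1 cards1 dvdn1 => /eqP t1.
  by move: pt; rewrite t1.
have solK := solvableS sKH solH.
have [M [sMK nsMK ntM /is_abelemP [w pw abM]]] := solvable_norm_abelem solK (normal_refl K) ntK.
have pM := abelem_pgroup abM; have abelM := abelem_abelian abM.
have [_ wM _] := pgroup_pdiv pM ntM.
have wK : w %| #|K| := dvdn_trans wM (cardSg sMK).
have wtu : (w == t) || (w == u) by have := (pgroupP piK) w pw wK; rewrite inE.
have [v [pv vK wv vs vL]] : exists v, [/\ prime v, v %| #|K|, w != v, s != v & v \in L].
  by case/orP: wtu => /eqP ->; [exists u | exists t]; split => //; rewrite eq_sym.
have ws : s != w by case/orP: wtu => /eqP ->.
have wL : w \in L by case/orP: wtu => /eqP ->.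
have [y Ky oy] := Cauchy pv vK.
have Hy : y \in H := subsetP sKH y Ky.
have pY : v.-elt y by rewrite /p_elt oy pnat_id.
have nty : y != 1 by rewrite -order_eq1 oy; case: v pv {vK wv vs vL oy pY} => [|[]].
have bad a b l1 l2 : a \in H -> b \in H -> l1 \in L -> l2 \in L -> l1 != l2 ->
    l1.-elt a -> l2.-elt b -> a != 1 -> b != 1 -> commute a b -> False.
  move=> Ha Hb l1L l2L ne pa pb na nb cab.
  have [d1 d2] := two_div ne pa pb na nb cab.
  exact: (hno (a * b) l1 l2 (groupM Ha Hb) l1L l2L ne d1 d2).
have sMH := subset_trans sMK sKH.
have cNM : 'C_N(M) = 1.
  apply/trivgP/subsetP => n /setIP[Nn cMn]; rewrite inE; apply/negPn/negP => ntn.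
  have [m Mm ntm] := trivgPn _ ntM.
  apply: (bad n m s w) => //; try exact: (subsetP sNH); try exact: (subsetP sMH).
  - exact: mem_p_elt pN Nn.
  - exact: mem_p_elt pM Mm.
  - exact: (centP cMn).
have cNy : 'C_N[y] = 1.
  apply/trivgP/subsetP => n /setIP[Nn cyn]; rewrite inE; apply/negPn/negP => ntn.
  apply: (bad n y s v) => //; try exact: (subsetP sNH).
  - exact: mem_p_elt pN Nn.
  - exact: (cent1P cyn).
have cMy : 'C_M[y] = 1.
  apply/trivgP/subsetP => m /setIP[Mm cym]; rewrite inE; apply/negPn/negP => ntm.
  apply: (bad m y w v) => //; try exact: (subsetP sMH).
  - exact: mem_p_elt pM Mm.
  - exact: (cent1P cym).
have cop : coprime #|M| #|N| by apply: (pnat_cop _ pM pN); rewrite eq_sym.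
have nNK := subset_trans sKH nNH.
have pry : prime #[y] by rewrite oy.
have N1 := key_fpf abN (subset_trans sMK nNK) (subsetP nNK y Ky)
  (subsetP (normal_norm nsMK) y Ky) pry ntM cNM cNy cMy cop.
by move: ntN; rewrite N1 eqxx.
Qed.

Lemma lucido (gT : finGroupType) (G : {group gT}) (a b c : nat) :
  solvable G -> prime a -> prime b -> prime c -> a != b -> a != c -> b != c ->
  a %| #|G| -> b %| #|G| -> c %| #|G| ->
  exists g l1 l2, [/\ g \in G, l1 \in [:: a; b; c], l2 \in [:: a; b; c], l1 != l2
                   & (l1 %| #[g]) && (l2 %| #[g])].
Proof.
move=> solG pa pb pc ab ac bc aG bG cG; apply: NNPP => hno'.
have [H hallH _] := Hall_exists_subJ (pred3 a b c) solG.
have sHG := pHall_sub hallH; have piH := pHall_pgroup hallH.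
have hno g l1 l2 : g \in H -> l1 \in [:: a; b; c] -> l2 \in [:: a; b; c] -> l1 != l2 ->
    l1 %| #[g] -> l2 %| #[g] -> False.
  move=> Hg l1L l2L ne d1 d2; apply: hno'; exists g, l1, l2; split => //.
    exact: (subsetP sHG).
  by rewrite d1 d2.
have G0 : 0 < #|G| by apply: cardG_gt0.
have aH : a %| #|H| by rewrite (card_Hall hallH) dvd_part_pi // !inE eqxx.
have bH : b %| #|H| by rewrite (card_Hall hallH) dvd_part_pi // !inE eqxx ?orbT.
have cH : c %| #|H| by rewrite (card_Hall hallH) dvd_part_pi // !inE eqxx ?orbT.
have ntH : H :!=: 1.
  apply/eqP => H1; move: aH; rewrite H1 cards1 dvdn1 => /eqP a1.
  by move: pa; rewrite a1.
have solH := solvableS sHG solG.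
have [N [sNH nsNH ntN /is_abelemP [s ps abN]]] := solvable_norm_abelem solH (normal_refl H) ntH.
have pN := abelem_pgroup abN; have abelN := abelem_abelian abN.
have nNH := normal_norm nsNH.
have [_ sN _] := pgroup_pdiv pN ntN.
have sH : s %| #|H| := dvdn_trans sN (cardSg sNH).
have : s \in pred3 a b c := (pgroupP piH) s ps sH.
have L1 : a \in [:: a; b; c] by rewrite !inE eqxx.
have L2 : b \in [:: a; b; c] by rewrite !inE eqxx ?orbT.
have L3 : c \in [:: a; b; c] by rewrite !inE eqxx ?orbT.
rewrite !inE => /or3P[] /eqP es; subst s.
- exact: (core pa pb pc ab ac bc L1 L2 L3 solH sNH nNH abelN pN ntN bH cH hno).
- by apply: (core pb pa pc _ bc ac L2 L1 L3 solH sNH nNH abelN pN ntN aH cH hno); rewrite eq_sym.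
- by apply: (core pc pa pb _ _ ab L3 L1 L2 solH sNH nNH abelN pN ntN aH bH hno); rewrite eq_sym.
Qed.

Lemma three_primes (n a b c : nat) : 0 < n -> prime a -> prime b -> prime c ->
  a != b -> a != c -> b != c -> a %| n -> b %| n -> c %| n -> 3 <= size (primes n).
Proof.
move=> n0 pa pb pc ab ac bc an bn cn.
have -> : 3 = size [:: a; b; c] by [].
apply: uniq_leq_size.
  by rewrite /= !inE negb_or ab ac bc.
by move=> z; rewrite !inE mem_primes => /or3P[] /eqP ->; rewrite n0 ?pa ?pb ?pc.
Qed.

Lemma primes_dvd_size (m n : nat) : m %| n -> 0 < n -> size (primes m) <= size (primes n).
Proof.
move=> mn n0; apply: uniq_leq_size; first exact: primes_uniq.
move=> z; rewrite !mem_primes => /and3P[pz m0 zm].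
by rewrite pz n0 (dvdn_trans zm mn).
Qed.

Lemma order_dvd_gen (gT : finGroupType) (x y : gT) :
  #[x] %| #|<<[set x; y]>>| /\ #[y] %| #|<<[set x; y]>>|.
Proof.
split; apply: cardSg; rewrite cycle_subG mem_gen // !inE eqxx ?orbT //.
Qed.

Lemma avoid (n : nat) (L : seq nat) : exists s : seq nat,
  [/\ uniq s, size (primes n) <= size s + size L &
      forall z, z \in s -> [/\ prime z, z %| n & z \notin L]].
Proof.
exists [seq z <- primes n | z \notin L]; split.
- exact: filter_uniq (primes_uniq n).
- rewrite -(count_predC (mem L)) size_filter addnC leq_add2l.
  rewrite -size_filter; apply: uniq_leq_size; first exact: filter_uniq (primes_uniq n).
  by move=> z; rewrite mem_filter => /andP[].
- move=> z; rewrite mem_filter mem_primes => /andP[zL /and3P[pz _ zn]]; by split.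
Qed.

Lemma pick2 (s : seq nat) : uniq s -> 2 <= size s ->
  exists r t, [/\ r \in s, t \in s & r != t].
Proof.
case: s => [|a [|b s]] //= /andP[u _] _; exists a, b.
by rewrite !inE !eqxx ?orbT; move: u; rewrite !inE negb_or => /andP[].
Qed.

Lemma pick3 (s : seq nat) : uniq s -> 3 <= size s ->
  exists r1 r2 r3, [/\ r1 \in s, r2 \in s, r3 \in s & [/\ r1 != r2, r1 != r3 & r2 != r3]].
Proof.
case: s => [|a [|b [|c s]]] //= /andP[u1 /andP[u2 _]] _; exists a, b, c.
move: u1 u2; rewrite !inE !negb_or => /andP[ab /andP[ac _]] /andP[bc _].
by rewrite !eqxx ?orbT.
Qed.

Lemma classify (q r t i j : nat) (P : nat -> bool) :
  i \in [:: q; r; t] -> j \in [:: q; r; t] -> i != j -> P i -> P j ->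
  (i \in [:: r; t] /\ j \in [:: r; t]) \/ (P q /\ (exists2 a : nat, a \in [:: r; t] & P a)).
Proof.
rewrite !inE => /or3P[]/eqP-> /or3P[]/eqP-> //; rewrite ?eqxx // => _ h1 h2;
  first [ by left; rewrite ?eqxx ?orbT
        | by right; split => //; exists r; rewrite ?inE ?eqxx
        | by right; split => //; exists t; rewrite ?inE ?eqxx ?orbT ].
Qed.

Theorem lemma3p1 (gT : finGroupType) (G : {group gT}) :
  solvable G -> (4 <= size (primes #|G|))%N -> Gamma_diam_le G 3.
Proof.
move=> solG hG x y vx vy.
have Gx : x \in G by case/andP: vx.
have Gy : y \in G by case/andP: vy.
have G0 : 0 < #|G| by apply: cardG_gt0.
have path1 u v : u \in G -> v \in G -> prime_graph_adj u v -> Gamma_dist_le G 3 u v.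
  by move=> Gu Gv a; exists [:: v]; rewrite /= Gv a.
have path2 u g v : g \in G -> v \in G -> prime_graph_adj u g -> prime_graph_adj g v ->
    Gamma_dist_le G 3 u v.
  by move=> Gg Gv a1 a2; exists [:: g; v]; rewrite /= Gg Gv a1 a2.
have path3 u g1 g2 v : g1 \in G -> g2 \in G -> v \in G -> prime_graph_adj u g1 ->
    prime_graph_adj g1 g2 -> prime_graph_adj g2 v -> Gamma_dist_le G 3 u v.
  by move=> G1 G2 Gv a1 a2 a3; exists [:: g1; g2; v]; rewrite /= G1 G2 Gv a1 a2 a3.
have [<-|nxy] := eqVneq x y; first by exists [::].
have [/existsP[g /andP[Gg bg]] | nb] := boolP [exists g in G, 3 <= size (primes #[g])].
  have adjg h : h != g -> prime_graph_adj g h /\ prime_graph_adj h g.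
    move=> ng; have [d1 d2] := order_dvd_gen g h; have [e1 e2] := order_dvd_gen h g.
    rewrite /prime_graph_adj ng eq_sym ng /=; split.
      exact: leq_trans bg (primes_dvd_size d1 (cardG_gt0 _)).
    exact: leq_trans bg (primes_dvd_size e2 (cardG_gt0 _)).
  have [exg|nxg] := eqVneq x g.
    by apply: path1 => //; rewrite exg; apply: (proj1 (adjg y _)); rewrite -exg eq_sym.
  have [eyg|nyg] := eqVneq y g.
    by apply: path1 => //; rewrite eyg; apply: (proj2 (adjg x _)); rewrite -eyg.
  exact: (path2 x g y Gg Gy (adjg x nxg).2 (adjg y nyg).1).
have hno g : g \in G -> size (primes #[g]) < 3.
  move=> Gg; rewrite ltnNge; apply: contra nb => b; apply/existsP; exists g; by rewrite Gg b.
have adjL u v (a b c : nat) : u \in G -> v \in G -> prime a -> prime b -> prime c ->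
    a != b -> a != c -> b != c ->
    (a %| #[u]) || (a %| #[v]) -> (b %| #[u]) || (b %| #[v]) -> (c %| #[u]) || (c %| #[v]) ->
    prime_graph_adj u v.
  move=> Gu Gv pa pb pc ab ac bc ha hb hc.
  have [d1 d2] := order_dvd_gen u v.
  have dv z : (z %| #[u]) || (z %| #[v]) -> z %| #|<<[set u; v]>>|.
    by case/orP => h; [apply: dvdn_trans d1 | apply: dvdn_trans d2].
  rewrite /prime_graph_adj (three_primes (cardG_gt0 _) pa pb pc ab ac bc (dv _ ha) (dv _ hb) (dv _ hc)).
  rewrite andbT; apply/eqP => euv; subst v.
  have := hno u Gu; rewrite ltnNge (three_primes (order_gt0 u) pa pb pc ab ac bc) //.
  - by rewrite orbb in ha.
  - by rewrite orbb in hb.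
  - by rewrite orbb in hc.
have nt1 u : Gamma_vertex G u -> u != 1.
  case/andP=> _ /existsP[z /andP[Gz /andP[_ az]]]; apply/eqP => u1; subst u.
  have e : <<[set 1; z]>> = <[z]>.
    apply/eqP; rewrite eqEsubset gen_subG cycle_subG mem_gen ?andbT; last by rewrite !inE eqxx orbT.
    by apply/subsetP => w; rewrite !inE => /orP[] /eqP ->; rewrite ?group1 ?cycle_id.
  by have := hno z Gz; rewrite ltnNge -[#[z]]/#|<[z]>| -e az.
set p := pdiv #[x]; set q := pdiv #[y].
have pp : prime p by apply: pdiv_prime; rewrite order_gt1 nt1.
have pq : prime q by apply: pdiv_prime; rewrite order_gt1 nt1.
have px : p %| #[x] := pdiv_dvd _.
have qy : q %| #[y] := pdiv_dvd _.
have [epq|npq] := eqVneq p q.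
  have [s [us hs ms]] := avoid #|G| [:: p].
  have [r1 [r2 [r3 [s1 s2 s3 [r12 r13 r23]]]]] : exists r1 r2 r3,
      [/\ r1 \in s, r2 \in s, r3 \in s & [/\ r1 != r2, r1 != r3 & r2 != r3]].
    apply: pick3 => //; have := leq_trans hG hs; rewrite /= addn1 ltnS //.
  have [pr1 dr1 nr1] := ms _ s1; have [pr2 dr2 nr2] := ms _ s2; have [pr3 dr3 nr3] := ms _ s3.
  have [g [l1 [l2 [Gg l1L l2L l12 /andP[d1 d2]]]]] :=
    lucido solG pr1 pr2 pr3 r12 r13 r23 dr1 dr2 dr3.
  have sL z : z \in [:: r1; r2; r3] -> z \in s by rewrite !inE => /or3P[]/eqP->.
  have [pl1 _ nl1] := ms _ (sL _ l1L); have [pl2 _ nl2] := ms _ (sL _ l2L).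
  rewrite !inE in nl1 nl2.
  have py : p %| #[y] by rewrite epq.
  apply: (path2 x g y Gg Gy).
    by apply: (adjL x g p l1 l2) => //; rewrite ?px ?d1 ?d2 ?orbT // eq_sym.
  by apply: (adjL g y l1 l2 p) => //; rewrite ?py ?d1 ?d2 ?orbT.
have [s [us hs ms]] := avoid #|G| [:: p; q].
have [r [t [sr st rt]]] : exists r t, [/\ r \in s, t \in s & r != t].
  apply: pick2 => //; have := leq_trans hG hs; rewrite /= addn2 ltnS //.
have [pr dr nr] := ms _ sr; have [pt dt nt] := ms _ st.
rewrite !inE !negb_or in nr nt.
case/andP: nr => rp rq; case/andP: nt => tp tq.
have rtP z : z \in [:: r; t] -> [/\ prime z, z %| #|G|, z != p & z != q].
  by rewrite !inE => /orP[]/eqP->; split.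
have qr : q != r by rewrite eq_sym.
have qt : q != t by rewrite eq_sym.
have pr' : p != r by rewrite eq_sym.
have pt' : p != t by rewrite eq_sym.
have pG : p %| #|G| := dvdn_trans px (order_dvdG Gx).
have qG : q %| #|G| := dvdn_trans qy (order_dvdG Gy).
have leftc g i j : g \in G -> i \in [:: r; t] -> j \in [:: r; t] -> i != j ->
    i %| #[g] -> j %| #[g] -> Gamma_dist_le G 3 x y.
  move=> Gg iL jL ij di dj.
  have [pi _ ip iq] := rtP _ iL; have [pj _ jp jq] := rtP _ jL.
  apply: (path2 x g y Gg Gy).
    by apply: (adjL x g p i j) => //; rewrite ?px ?di ?dj ?orbT // eq_sym.
  by apply: (adjL g y i j q) => //; rewrite ?qy ?di ?dj ?orbT.
have [g1 [i1 [j1 [Gg1 i1L j1L ij1 /andP[di1 dj1]]]]] :=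
  lucido solG pq pr pt qr qt rt qG dr dt.
have [g2 [i2 [j2 [Gg2 i2L j2L ij2 /andP[di2 dj2]]]]] :=
  lucido solG pp pr pt pr' pt' rt pG dr dt.
case: (classify (P := fun z => z %| #[g1]) i1L j1L ij1 di1 dj1) => [[iL jL]|[qg1 [a1 a1L da1]]].
  exact: (leftc g1 i1 j1).
case: (classify (P := fun z => z %| #[g2]) i2L j2L ij2 di2 dj2) => [[iL jL]|[pg2 [a2 a2L da2]]].
  exact: (leftc g2 i2 j2).
have [pa1 _ a1p a1q] := rtP _ a1L; have [pa2 _ a2p a2q] := rtP _ a2L.
apply: (path3 x g1 g2 y Gg1 Gg2 Gy).
- by apply: (adjL x g1 p q a1) => //; rewrite ?px ?qg1 ?da1 ?orbT // eq_sym.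
- by apply: (adjL g1 g2 q a1 p) => //; rewrite ?qg1 ?da1 ?pg2 ?orbT // eq_sym.
- by apply: (adjL g2 y p a2 q) => //; rewrite ?pg2 ?da2 ?qy ?orbT // eq_sym.
Qed.
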